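(* Let $n,p$ be positive integers with $p<n/2$. Let $\boldsymbol{X}\in\mathbb{R}^{n\times p}$ and $\boldsymbol{Z}\in\mathbb{R}^n$ be deterministic, and let $\boldsymbol{Y}=\boldsymbol{X}\beta+b\boldsymbol{Z}+\boldsymbol{\varepsilon}$ for some $\beta\in\mathbb{R}^p$, $b\in\mathbb{R}$, where the noise vector $\boldsymbol{\varepsilon}=(\varepsilon_1,\ldots,\varepsilon_n)^\top$ has exchangeable components, i.e. $(\varepsilon_1,\ldots,\varepsilon_n)\overset{d}{=}(\varepsilon_{\sigma(1)},\ldots,\varepsilon_{\sigma(n)})$ for every permutation $\sigma$ of $\{1,\ldots,n\}$. Let $\boldsymbol{P}_0=\boldsymbol{I},\boldsymbol{P}_1,\ldots,\boldsymbol{P}_K$ be fixed distinct $n\times n$ permutation matrices such that for all $i,j\in\{0,\ldots,K\}$ there is $k\in\{0,\ldots,K\}$ with $\boldsymbol{P}_k=\boldsymbol{P}_i\boldsymbol{P}_j$. Let $T:\mathbb{R}^{n-2p}\times\mathbb{R}^{n-2p}\to\mathbb{R}$ be any fixed function, and let $\phi$ be defined as in the context. Then, if $b=0$, $\phi$ is a valid p-value: $\mathbb{P}(\phi\le\alpha)\le\alpha$ for all $\alpha\in[0,1]$.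
   Context: Let $\boldsymbol{V}_0\in\mathbb{R}^{n\times(n-p)}$ be a matrix with orthonormal columns spanning an $(n-p)$-dimensional subspace of $\mathrm{span}(\boldsymbol{X})^\perp$ (the orthogonal complement of the column space of $\boldsymbol{X}$), and set $\boldsymbol{V}_k:=\boldsymbol{P}_k\boldsymbol{V}_0$. For $k=1,\ldots,K$ let $\tilde{\boldsymbol{V}}_k\in\mathbb{R}^{n\times(n-2p)}$ be a matrix with orthonormal columns spanning a subspace of $\mathrm{span}(\boldsymbol{V}_0)\cap\mathrm{span}(\boldsymbol{V}_k)$. The residual permutation test p-value is $$\phi:=\frac{1}{K+1}\Bigl(1+\sum_{k=1}^K\mathbb{1}\Bigl\{\min_{\tilde{\boldsymbol{V}}\in\{\tilde{\boldsymbol{V}}_1,\ldots,\tilde{\boldsymbol{V}}_K\}}T\bigl(\tilde{\boldsymbol{V}}^\top\boldsymbol{Z},\tilde{\boldsymbol{V}}^\top\boldsymbol{Y}\bigr)\le T\bigl(\tilde{\boldsymbol{V}}_k^\top\boldsymbol{Z},\tilde{\boldsymbol{V}}_k^\top\boldsymbol{P}_k\boldsymbol{Y}\bigr)\Bigr\}\Bigr).$$ *)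

(* Defs.v *)
From HB Require Import structures.
From mathcomp Require Import all_boot all_order all_algebra all_fingroup.
From mathcomp Require Import all_classical all_reals all_analysis.

Set Implicit Arguments.
Unset Strict Implicit.
Unset Printing Implicit Defensive.

Import Order.TTheory GRing.Theory Num.Theory.
Local Open Scope classical_set_scope.
Local Open Scope ring_scope.

Section Defs.
Context {R : realType}.

(* A tuple of reals (an element of R^n, equipped with the product Borel
   sigma-algebra of MathComp-Analysis) seen as a column vector. *)
Definition tcol (n : nat) (t : n.-tuple R) : 'cV[R]_n := \col_i tnth t i.

Definition permute_tuple (n : nat) (s : 'S_n) (t : n.-tuple R) : n.-tuple R :=
  [tuple tnth t (s i) | i < n].

Definition exchangeable d (Omega : measurableType d) (P : probability Omega R)
    (n : nat) (eps : Omega -> n.-tuple R) : Prop :=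
  forall (s : 'S_n) (A : set (n.-tuple R)), measurable A ->
    P (eps @^-1` A) = P ((permute_tuple s \o eps) @^-1` A).

Definition Tobs (n m K : nat) (T : 'cV[R]_m -> 'cV[R]_m -> R)
    (Vt : 'I_K.+1 -> 'M[R]_(n, m)) (Z Y : 'cV[R]_n) (k : 'I_K.+1) : R :=
  T ((Vt k)^T *m Z) ((Vt k)^T *m Y).

(* The big operator
   needs a neutral element; we use the value at k0 which itself belongs to
   the (nonempty) family when k0 != 0, so the result is the genuine minimum. *)
Definition Tmin (n m K : nat) (T : 'cV[R]_m -> 'cV[R]_m -> R)
    (Vt : 'I_K.+1 -> 'M[R]_(n, m)) (Z Y : 'cV[R]_n) (k0 : 'I_K.+1) : R :=
  \big[Num.min/Tobs T Vt Z Y k0]_(k' < K.+1 | k' != ord0) Tobs T Vt Z Y k'.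

Definition rpt_pvalue (n m K : nat) (T : 'cV[R]_m -> 'cV[R]_m -> R)
    (P : 'I_K.+1 -> 'M[R]_n) (Vt : 'I_K.+1 -> 'M[R]_(n, m))
    (Z Y : 'cV[R]_n) : R :=
  (1 + \sum_(k < K.+1 | k != ord0)
         (Tmin T Vt Z Y k <= T ((Vt k)^T *m Z) ((Vt k)^T *m (P k *m Y)))%R%:R)
  / (K.+1)%:R.

End Defs.

(* Main.v *)
Require Import Defs.
From HB Require Import structures.
From mathcomp Require Import all_boot all_order all_algebra all_fingroup.
From mathcomp Require Import all_classical all_reals all_analysis.
From mathcomp Require Import measurable_realfun.

Import Order.TTheory GRing.Theory Num.Theory.
Local Open Scope classical_set_scope.
Local Open Scope ring_scope.

Set Implicit Arguments.
Unset Strict Implicit.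

Section Helpers.
Context {R : realType}.

Definition colt (m : nat) (c : 'cV[R]_m) : m.-tuple R := [tuple c i 0 | i < m].

Lemma tcolK m (c : 'cV[R]_m) : tcol (colt c) = c.
Proof. by apply/matrixP => i j; rewrite !mxE tnth_mktuple (ord1 j). Qed.

Lemma tcol_perm n (s : 'S_n) (t : n.-tuple R) :
  tcol (permute_tuple s t) = perm_mx s *m tcol t.
Proof. by apply/matrixP => i j; rewrite -row_permE !mxE !tnth_mktuple. Qed.

Lemma meas_lin n m (M : 'M[R]_(m, n)) :
  measurable_fun setT (fun t : n.-tuple R => colt (M *m tcol t)).
Proof.
apply/measurable_fun_tnthP => i.
rewrite (_ : _ \o _ = fun t : n.-tuple R => \sum_(j <- index_enum 'I_n) M i j * tnth t j).
  apply: measurable_sum => j.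
  apply: measurableT_comp => //; exact: measurable_tnth.
by apply/funext => t /=; rewrite tnth_mktuple !mxE; apply: eq_bigr => j _; rewrite mxE.
Qed.

Lemma meas_T n m (T : 'cV[R]_m -> 'cV[R]_m -> R)
  (Tm : measurable_fun [set: m.-tuple R * m.-tuple R] (fun uv => T (tcol uv.1) (tcol uv.2)))
  a (M : 'M[R]_(m, n)) :
  measurable_fun setT (fun t : n.-tuple R => T a (M *m tcol t)).
Proof.
rewrite (_ : (fun t => _) = (fun uv : m.-tuple R * m.-tuple R => T (tcol uv.1) (tcol uv.2))
   \o (fun t : n.-tuple R => (colt a, colt (M *m tcol t)))).
  apply: measurableT_comp => //; apply: measurable_fun_pair => //.
  exact: meas_lin.
by apply/funext => t /=; rewrite !tcolK.
Qed.

Lemma meas_bigmin d (X : measurableType d) (I : eqType) (r : seq I) (Pp : pred I)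
  (F : I -> X -> R) (f0 : X -> R) :
  measurable_fun setT f0 -> (forall i, measurable_fun setT (F i)) ->
  measurable_fun setT (fun x => \big[Num.min/f0 x]_(i <- r | Pp i) F i x).
Proof.
move=> m0 mF; elim: r => [|i r IH].
  by under eq_fun do rewrite big_nil.
under eq_fun do rewrite big_cons.
case: (Pp i) => //; exact: measurable_minr.
Qed.

Lemma meas_sum_cond d (X : measurableType d) (I : eqType) (r : seq I) (Pp : pred I)
  (F : I -> X -> R) :
  (forall i, measurable_fun setT (F i)) ->
  measurable_fun setT (fun x => \sum_(i <- r | Pp i) F i x).
Proof.
move=> mF; under eq_fun do rewrite big_mkcond.
apply: measurable_sum => i; case: (Pp i) => //.
Qed.

Lemma meas_le_nat d (X : measurableType d) (f g : X -> R) :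
  measurable_fun setT f -> measurable_fun setT g ->
  measurable_fun setT (fun x => ((f x <= g x)%R%:R : R)).
Proof.
move=> mf mg.
rewrite (_ : (fun x => _) = (fun x => if f x <= g x then 1 else 0)).
  by apply: measurable_fun_ifT => //; exact: measurable_fun_ler.
by apply/funext => x; case: ifP.
Qed.

Lemma meas_le_set d (X : measurableType d) (f : X -> R) (a : R) :
  measurable_fun setT f -> measurable [set x | f x <= a].
Proof.
move=> mf; have := mf measurableT _ (measurable_itv `]-oo, a]).
rewrite setTI; congr measurable; apply/seteqP; split => x /=; rewrite in_itv //=.
Qed.

End Helpers.
Section H1b.
Context {R : realType}.
Lemma coltK n (t : n.-tuple R) : colt (tcol t) = t.
Proof. by apply: eq_from_tnth => i; rewrite tnth_mktuple mxE. Qed.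

Lemma meas_perm n (s : 'S_n) : measurable_fun setT (@permute_tuple R n s).
Proof.
rewrite (_ : permute_tuple s = fun t => colt (perm_mx s *m tcol t)).
  exact: meas_lin.
by apply/funext => t; rewrite -tcol_perm coltK.
Qed.
End H1b.

Section Det.
Context {R : realType}.
Variables (n m K : nat) (T : 'cV[R]_m -> 'cV[R]_m -> R) (Vt : 'I_K.+1 -> 'M[R]_(n, m)) (Z : 'cV[R]_n).

Lemma Tmin_le Y (k0 k : 'I_K.+1) : k != ord0 -> Tmin T Vt Z Y k0 <= Tobs T Vt Z Y k.
Proof. by move=> hk; rewrite /Tmin (bigD1 k) //= ge_min lexx. Qed.

Lemma Tmin_mem Y (k0 : 'I_K.+1) : exists k, (k != ord0 \/ k = k0) /\ Tmin T Vt Z Y k0 = Tobs T Vt Z Y k.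
Proof.
rewrite /Tmin; apply: (big_ind (fun r => exists k, (k != ord0 \/ k = k0) /\ r = Tobs T Vt Z Y k)).
- by exists k0; split => //; right.
- move=> x y [kx [hx ->]] [ky [hy ->]]; rewrite /Num.min /Order.min.
  by case: ifP => _; [exists kx | exists ky].
- by move=> k hk; exists k; split => //; left.
Qed.

Lemma Tmin_idx Y (k0 k1 : 'I_K.+1) : k0 != ord0 -> k1 != ord0 ->
  Tmin T Vt Z Y k0 = Tmin T Vt Z Y k1.
Proof.
move=> h0 h1; apply/le_anti/andP; split.
- have [k [hk ->]] := Tmin_mem Y k1; apply: Tmin_le; case: hk => // ->; done.
- have [k [hk ->]] := Tmin_mem Y k0; apply: Tmin_le; case: hk => // ->; done.
Qed.

Lemma Tmin_congr Y1 Y2 (k0 : 'I_K.+1) :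
  (forall k, k != ord0 -> (Vt k)^T *m Y1 = (Vt k)^T *m Y2) -> k0 != ord0 ->
  Tmin T Vt Z Y1 k0 = Tmin T Vt Z Y2 k0.
Proof.
move=> H h0; rewrite /Tmin /Tobs (H k0 h0); apply: eq_bigr => k hk; by rewrite H.
Qed.

End Det.

Lemma count_lemma {R : realType} N (mm : 'I_N -> R) (c : R) : 0 <= c ->
  \sum_(j < N) ((\sum_(k < N) (mm j <= mm k)%R%:R) <= c)%R%:R <= c.
Proof.
move=> c0.
have [[j0 Pj0]|none] := pselect (exists j0, (\sum_(k < N) (mm j0 <= mm k)%R%:R) <= c).
  pose Pp := fun j => (\sum_(k < N) (mm j <= mm k)%R%:R) <= c.
  case: (@arg_minP _ R _ j0 Pp mm Pj0) => js Pjs Hmin.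
  apply: le_trans Pjs; apply: ler_sum => j _.
  case hj: (_ <= c); last by rewrite ler0n.
  by rewrite (Hmin j hj).
rewrite big1 // => j _.
case hj: (_ <= c) => //; exfalso; apply: none; by exists j.
Qed.

Lemma sum_prob_le {R : realType} d (Omega : measurableType d) (Pr : probability Omega R)
  N (B : 'I_N -> set Omega) (c : R) :
  (forall j, measurable (B j)) ->
  (forall w, \sum_(j < N) (\1_(B j) w : R) <= c) ->
  (\sum_(j < N) Pr (B j) <= c%:E)%E.
Proof.
move=> mB hc.
have e1 : forall j, Pr (B j) = (\int[Pr]_(x in setT) (\1_(B j) x)%:E)%E.
  by move=> j; rewrite integral_indic // setIT.
under eq_bigr do rewrite e1.
rewrite -(@ge0_integral_sum _ _ _ Pr setT measurableT _ (fun j x => (\1_(B j) x)%:E)); last first.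
- by move=> j x _; rewrite lee_fin indicE ler0n.
- by move=> j; apply: measurableT_comp => //; exact: measurable_indic.
apply: (@le_trans _ _ (\int[Pr]_(x in setT) (cst c%:E x))%E).
  apply: ge0_le_integral => //.
  - by move=> x _; rewrite sume_ge0 // => j _; rewrite lee_fin indicE ler0n.
  - under eq_fun do rewrite sumEFin.
    apply: measurableT_comp => //; apply: measurable_sum => j; exact: measurable_indic.
  - by move=> x _; rewrite sumEFin lee_fin.
rewrite integral_cst //.
have h1 : (Pr : measure Omega R) [set: Omega] = 1%E := probability_setT Pr.
by rewrite h1 mule1.
Qed.

Unset Implicit Arguments.
Set Strict Implicit.

Theorem theorem1 (R : realType) (n p K : nat)
  (hp : (0 < p)%N) (hpn : (2 * p < n)%N)
  (X : 'M[R]_(n, p)) (Z : 'cV[R]_n) (beta : 'cV[R]_p) (b : R)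
  (d : measure_display) (Omega : measurableType d) (Pr : probability Omega R)
  (eps : Omega -> n.-tuple R)
  (eps_meas : measurable_fun [set: Omega] eps)
  (eps_exch : exchangeable Pr eps)
  (P : 'I_K.+1 -> 'M[R]_n)
  (P0 : P ord0 = 1%:M)
  (P_perm : forall k, exists s : 'S_n, P k = perm_mx s)
  (P_inj : injective P)
  (P_closed : forall i j, exists k, P k = P i *m P j)
  (T : 'cV[R]_(n - 2 * p) -> 'cV[R]_(n - 2 * p) -> R)
  (T_meas : measurable_fun [set: (n - 2 * p).-tuple R * (n - 2 * p).-tuple R]
              (fun uv => T (tcol uv.1) (tcol uv.2)))
  (V0 : 'M[R]_(n, n - p))
  (V0_orth : V0^T *m V0 = 1%:M)
  (V0_perp : X^T *m V0 = 0)
  (Vt : 'I_K.+1 -> 'M[R]_(n, n - 2 * p))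
  (Vt_orth : forall k, k != ord0 -> (Vt k)^T *m Vt k = 1%:M)
  (Vt_sub0 : forall k, k != ord0 -> ((Vt k)^T <= V0^T)%MS)
  (Vt_subk : forall k, k != ord0 -> ((Vt k)^T <= (P k *m V0)^T)%MS)
  (hb : b = 0) :
  let Y := fun w : Omega => X *m beta + b *: Z + tcol (eps w) in
  let phi := fun w : Omega => rpt_pvalue T P Vt Z (Y w) in
  forall alpha : R, 0 <= alpha <= 1 ->
    (Pr [set w | (phi w <= alpha)%R] <= alpha%:E)%E.
Proof.
move=> Y phi alpha /andP[a0 a1].
pose sk := fun k => odflt 1%g [pick s : 'S_n | P k == perm_mx s].
have Psk : forall k, P k = perm_mx (sk k).
  move=> k; rewrite /sk; case: pickP => [s /eqP //| H]; exfalso.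
  have [s hs] := P_perm k; by move: (H s); rewrite hs eqxx.
have PtP : forall k, (P k)^T *m P k = 1%:M.
  by move=> k; rewrite Psk tr_perm_mx -perm_mxM mulVg perm_mx1.
have PPt : forall k, P k *m (P k)^T = 1%:M.
  by move=> k; rewrite Psk tr_perm_mx -perm_mxM mulgV perm_mx1.
have V0X : V0^T *m X = 0.
  by rewrite -[V0^T *m X]trmxK trmx_mul trmxK V0_perp trmx0.
have VX : forall k, k != ord0 -> (Vt k)^T *m X = 0.
  move=> k hk; have /submxP [D ->] := Vt_sub0 k hk.
  by rewrite -mulmxA V0X mulmx0.
have VPX : forall k, k != ord0 -> (Vt k)^T *m (P k *m X) = 0.
  move=> k hk; have /submxP [D ->] := Vt_subk k hk.
  by rewrite trmx_mul -!mulmxA (mulmxA (P k)^T) PtP mul1mx V0X mulmx0.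
have phiE : forall w, phi w = rpt_pvalue T P Vt Z (tcol (eps w)).
  move=> w; rewrite /phi /Y hb scale0r addr0 /rpt_pvalue; congr ((1 + _) / _).
  apply: eq_bigr => k hk.
  rewrite (@Tmin_congr _ _ _ _ T _ Z _ (tcol (eps w)) k) //; last first.
    by move=> k' hk'; rewrite mulmxDr mulmxA VX // mul0mx add0r.
  by rewrite mulmxDr mulmxDr (mulmxA (P k) X beta) mulmxA VPX // mul0mx add0r.
pose k1 : 'I_K.+1 := ord_max.
pose S := fun v : 'cV[R]_n => Tmin T Vt Z v k1.
pose psi := fun v : 'cV[R]_n =>
  (\sum_(k < K.+1) (S v <= S (P k *m v))%R%:R) / (K.+1)%:R : R.
pose F := fun v => rpt_pvalue T P Vt Z v.
have Fpsi : forall v, psi v <= F v.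
  move=> v; rewrite /psi /F /rpt_pvalue ler_pM2r ?invr_gt0 ?ltr0Sn //.
  rewrite (bigD1 ord0) //= P0 mul1mx lexx lerD2l.
  apply: ler_sum => k hk.
  case h: (S v <= _); last by rewrite ler0n.
  have k1n0 : k1 != ord0.
    rewrite -val_eqE /=; apply: contra hk => /eqP K0.
    by rewrite -val_eqE /= -leqn0 -K0 -ltnS ltn_ord.
  rewrite (Tmin_idx _ _ _ _ hk k1n0) -/(S v).
  have -> : S v <= T ((Vt k)^T *m Z) ((Vt k)^T *m (P k *m v)).
    exact: (le_trans h (Tmin_le T Vt Z (P k *m v) k1 hk)).
  by [].
have mTmin : forall (Q : 'M[R]_n) k0,
    measurable_fun setT (fun t : n.-tuple R => Tmin T Vt Z (Q *m tcol t) k0).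
  move=> Q k0; rewrite /Tmin.
  apply: (@meas_bigmin R _ _ _ _ _ (fun k t => Tobs T Vt Z (Q *m tcol t) k)
                                     (fun t => Tobs T Vt Z (Q *m tcol t) k0)).
    rewrite /Tobs; under eq_fun do rewrite mulmxA; exact: meas_T.
  move=> k; rewrite /Tobs; under eq_fun do rewrite mulmxA; exact: meas_T.
have mS : forall Q : 'M[R]_n, measurable_fun setT (fun t : n.-tuple R => S (Q *m tcol t)).
  by move=> Q; exact: mTmin.
have mS1 : measurable_fun setT (fun t : n.-tuple R => S (tcol t)).
  rewrite (_ : (fun t => _) = (fun t : n.-tuple R => S (1%:M *m tcol t))) //.
  by apply/funext => t; rewrite mul1mx.
have mpsi : measurable_fun setT (fun t : n.-tuple R => psi (tcol t)).
  rewrite /psi; apply: measurable_funM; last exact: measurable_cst.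
  apply: measurable_sum => k; exact: meas_le_nat.
have mF : measurable_fun setT (fun t : n.-tuple R => F (tcol t)).
  rewrite /F /rpt_pvalue; apply: measurable_funM; last exact: measurable_cst.
  apply: measurable_funD; first exact: measurable_cst.
  apply: meas_sum_cond => k; apply: meas_le_nat.
    rewrite (_ : (fun t => _) = (fun t : n.-tuple R => Tmin T Vt Z (1%:M *m tcol t) k)).
      exact: mTmin.
    by apply/funext => t; rewrite mul1mx.
  under eq_fun do rewrite mulmxA; exact: meas_T.
pose A := [set t : n.-tuple R | psi (tcol t) <= alpha].
have mA : measurable A := meas_le_set alpha mpsi.
pose B := fun j : 'I_K.+1 => (permute_tuple (sk j) \o eps) @^-1` A.
have mB : forall j, measurable (B j).
  move=> j; have := (measurableT_comp (meas_perm (sk j)) eps_meas) measurableT _ mA.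
  by rewrite setTI.
have PrB : forall j, Pr (B j) = Pr (eps @^-1` A).
  by move=> j; rewrite /B -eps_exch.
pose c := fun j k : 'I_K.+1 => odflt ord0 [pick k' | P k' == P k *m P j].
have Pc : forall j k, P (c j k) = P k *m P j.
  move=> j k; rewrite /c; case: pickP => [k' /eqP //| H]; exfalso.
  have [k' hk'] := P_closed k j; by move: (H k'); rewrite hk' eqxx.
have cinj : forall j, injective (c j).
  move=> j k k' e; apply: P_inj.
  have := congr1 (fun M => M *m (P j)^T) (congr1 P e).
  by rewrite /= !Pc -!mulmxA PPt !mulmx1.
have hsum : forall w, \sum_(j < K.+1) (\1_(B j) w : R) <= alpha * (K.+1)%:R.
  move=> w; set v := tcol (eps w).
  have e : forall j, (\1_(B j) w : R) =
      ((\sum_(k < K.+1) (S (P j *m v) <= S (P k *m v))%R%:R) <= alpha * (K.+1)%:R)%R%:R.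
    move=> j; rewrite indicE; congr (_%:R); congr (nat_of_bool _).
    transitivity (psi (P j *m v) <= alpha).
      case: (boolP (w \in B j)) => [/set_mem|hn].
        by rewrite /B /A /= tcol_perm -Psk => ->.
      apply/esym/negbTE; apply: contra hn => h.
      by apply: mem_set; rewrite /B /A /= tcol_perm -Psk.
    rewrite /psi ler_pdivrMr ?ltr0Sn //; congr (_ <= _).
    rewrite [RHS](reindex_inj (cinj j)) /=; apply: eq_bigr => k _.
    by rewrite Pc mulmxA.
  rewrite (eq_bigr _ (fun j _ => e j)).
  by apply: (count_lemma (fun j => S (P j *m v))); rewrite mulr_ge0.
have := sum_prob_le Pr mB hsum.
under eq_bigr do rewrite PrB.
have mE : measurable (eps @^-1` A).
  by have := eps_meas measurableT _ mA; rewrite setTI.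
have sub : [set w | phi w <= alpha] `<=` eps @^-1` A.
  move=> w /=; rewrite phiE => h; rewrite /A /=.
  exact: le_trans (Fpsi _) h.
have mphiset : measurable [set w | phi w <= alpha].
  rewrite (_ : [set w | _] = eps @^-1` [set t | F (tcol t) <= alpha]).
    by have := eps_meas measurableT _ (meas_le_set alpha mF); rewrite setTI.
  by apply/seteqP; split=> w /=; rewrite phiE.
have hle : (Pr [set w | (phi w <= alpha)%R] <= Pr (eps @^-1` A))%E :=
  le_measure Pr (mem_set mphiset) (mem_set mE) sub.
have ge0 : (0 <= Pr (eps @^-1` A))%E by apply: measure_ge0.
have le1 : (Pr (eps @^-1` A) <= 1)%E by apply: probability_le1.
move: ge0 le1; case E: (Pr (eps @^-1` A)) => [r| |] //= r0 r1 hsumr.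
rewrite sumEFin lee_fin sumr_const card_ord in hsumr.
rewrite -[r *+ _]mulr_natr ler_pM2r ?ltr0Sn // in hsumr.
by apply: le_trans hle _; rewrite E lee_fin.
Qed.
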